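(* Let $d\in\mathbb N$, let $\emptyset\neq\Theta\subset\mathbb R^d$ be a $C^1$-hypersurface of positive reach, and let $\mu\colon\mathbb R^d\to\mathbb R^d$, $\sigma\colon\mathbb R^d\to\mathbb R^{d\times d}$ satisfy: there is $\varepsilon\in(0,\mathrm{reach}(\Theta))$ such that $\mu$ and $\sigma$ are bounded on $\Theta^\varepsilon$; $\mu$ is intrinsic Lipschitz continuous on $\mathbb R^d\setminus\Theta$; $\sigma$ is Lipschitz continuous. Then there exists $c\in(0,\infty)$ such that $\|\mu(x)\|+\|\sigma(x)\|\le c(1+\|x\|)$ for all $x\in\mathbb R^d$.
   Context: $\|\cdot\|$ is the Euclidean norm on vectors and the Frobenius norm on matrices. A nonempty $\Theta\subset\mathbb R^d$ is a $C^1$-hypersurface if for every $x\in\Theta$ there are open $U,V$ with $x\in U$ and a $C^1$-diffeomorphism $\phi\colon U\to V$ with $\phi(\Theta\cap U)=(\mathbb R^{d-1}\times\{0\})\cap V$ ($\{0\}$ if $d=1$). $d(x,\Theta)=\inf_{y\in\Theta}\|x-y\|$, $\Theta^\varepsilon=\{x:d(x,\Theta)<\varepsilon\}$, $\mathrm{reach}(\Theta)=\sup\{\varepsilon\ge0:$ every point of $\Theta^\varepsilon$ has a unique nearest point in $\Theta\}$. Intrinsic Lipschitz continuity on $A$: $\|f(x)-f(y)\|\le L\rho_A(x,y)$ for all $x,y\in A$, where $\rho_A(x,y)$ is the infimum of the lengths $l(\gamma)=\sup\sum_k\|\gamma(t_k)-\gamma(t_{k-1})\|$ (over partitions of $[0,1]$)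 of continuous curves $\gamma\colon[0,1]\to A$ from $x$ to $y$. *)

(* Defs.v *)
From HB Require Import structures.
From mathcomp Require Import all_boot all_order all_algebra.
From mathcomp Require Import all_classical all_reals all_analysis.
Set Implicit Arguments. Unset Strict Implicit. Unset Printing Implicit Defensive.
Import Order.TTheory GRing.Theory Num.Theory.
Import numFieldNormedType.Exports.
Local Open Scope classical_set_scope.
Local Open Scope ring_scope.

Section Defs.
Context {R : realType} {d : nat}.

Definition enorm (v : 'rV[R]_d) : R := Num.sqrt (\sum_(i < d) v 0 i ^+ 2).

Definition frob (A : 'M[R]_d) : R := Num.sqrt (\sum_(i < d) \sum_(j < d) A i j ^+ 2).

Definition C1_on (U : set 'rV[R]_d) (f : 'rV[R]_d -> 'rV[R]_d) : Prop :=
  (forall x, U x -> differentiable f x) /\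
  (forall v : 'rV[R]_d, {within U, continuous (fun x => 'd f x v)}).

(* R^{d-1} x {0}: the last coordinate vanishes. *)
Definition last_coord_zero (v : 'rV[R]_d) : Prop :=
  forall i : 'I_d, (nat_of_ord i).+1 = d -> v 0 i = 0.

Definition C1_hypersurface (Th : set 'rV[R]_d) : Prop :=
  Th !=set0 /\
  forall x, Th x -> exists (U V : set 'rV[R]_d) (phi psi : 'rV[R]_d -> 'rV[R]_d),
    [/\ open U, open V & U x] /\
    (forall u, U u -> V (phi u)) /\ (forall v, V v -> U (psi v)) /\
    (forall u, U u -> psi (phi u) = u) /\ (forall v, V v -> phi (psi v) = v) /\
    C1_on U phi /\ C1_on V psi /\
    phi @` (Th `&` U) = [set v | V v /\ last_coord_zero v].

Definition dist_set (x : 'rV[R]_d) (Th : set 'rV[R]_d) : R :=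
  inf [set enorm (x - y) | y in Th].

Definition tube (Th : set 'rV[R]_d) (eps : R) : set 'rV[R]_d :=
  [set x | dist_set x Th < eps].

Definition unique_nearest (Th : set 'rV[R]_d) (x : 'rV[R]_d) : Prop :=
  exists y, (Th y /\ enorm (x - y) = dist_set x Th) /\
    forall z, Th z -> enorm (x - z) = dist_set x Th -> z = y.

Definition reach (Th : set 'rV[R]_d) : \bar R :=
  ereal_sup [set e%:E | e in [set e : R | 0 <= e /\
                 forall x, tube Th e x -> unique_nearest Th x]].

Definition curve_length (gamma : R -> 'rV[R]_d) : \bar R :=
  ereal_sup [set l | exists (n : nat) (t : nat -> R),
    [/\ t 0%N = 0, t n = 1, (forall k, (k < n)%N -> t k <= t k.+1) &
        l = (\sum_(k < n) enorm (gamma (t k.+1) - gamma (t k)))%:E]].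

Definition intrinsic_dist (A : set 'rV[R]_d) (x y : 'rV[R]_d) : \bar R :=
  ereal_inf [set curve_length gamma | gamma in
    [set gamma : R -> 'rV[R]_d |
      [/\ {within `[0, 1], continuous gamma},
          (forall t, t \in `[0, 1] -> A (gamma t)),
          gamma 0 = x & gamma 1 = y]]].

(* intrinsic Lipschitz continuity on A (with convention L * (+oo) = +oo,
   enforced by taking L > 0) *)
Definition intrinsic_lipschitz (A : set 'rV[R]_d) (f : 'rV[R]_d -> 'rV[R]_d) : Prop :=
  exists L : R, 0 < L /\ forall x y, A x -> A y ->
    ((enorm (f x - f y))%:E <= L%:E * intrinsic_dist A x y)%E.

End Defs.

(* Main.v *)
Require Import Defs.
From HB Require Import structures.
From mathcomp Require Import all_boot all_order all_algebra.
From mathcomp Require Import all_classical all_reals all_analysis.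
From mathcomp Require Import ring lra.
Import Order.TTheory GRing.Theory Num.Theory.
Import numFieldNormedType.Exports.
Local Open Scope classical_set_scope.
Local Open Scope ring_scope.



Section Helpers.
Variable R : realType.

Lemma sum_sq_le (I : Type) (r : seq I) (F : I -> R) :
  \sum_(i <- r) F i ^+ 2 <= (\sum_(i <- r) `|F i|) ^+ 2.
Proof.
elim: r => [|a r IH]; first by rewrite !big_nil expr0n.
rewrite !big_cons.
have h0 : 0 <= \sum_(i <- r) `|F i| by apply: sumr_ge0 => i _.
have : F a ^+ 2 = `|F a| ^+ 2 by rewrite real_normK ?num_real.
have := normr_ge0 (F a).
nra.
Qed.

Lemma sqrt_sum_le (I : Type) (r : seq I) (F : I -> R) :
  Num.sqrt (\sum_(i <- r) F i ^+ 2) <= \sum_(i <- r) `|F i|.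
Proof.
have h0 : 0 <= \sum_(i <- r) `|F i| by apply: sumr_ge0 => i _.
rewrite -(ger0_norm h0) -sqrtr_sqr.
rewrite ler_sqrt ?sum_sq_le //; last by rewrite sqr_ge0.
Qed.

Variable d : nat.

Lemma enorm_ge0 (v : 'rV[R]_d) : 0 <= enorm v.
Proof. exact: sqrtr_ge0. Qed.

Lemma frob_ge0 (v : 'M[R]_d) : 0 <= frob v.
Proof. exact: sqrtr_ge0. Qed.

Lemma coord_le_enorm (v : 'rV[R]_d) i : `|v 0 i| <= enorm v.
Proof.
rewrite /enorm -sqrtr_sqr ler_sqrt; last by apply: sumr_ge0 => j _; rewrite sqr_ge0.
rewrite (bigD1 i) //= lerDl. all: try by apply: sumr_ge0 => j _; rewrite sqr_ge0. Show.
Qed.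

Lemma coord_le_frob (v : 'M[R]_d) i j : `|v i j| <= frob v.
Proof.
rewrite /frob -sqrtr_sqr ler_sqrt; last first.
  by apply: sumr_ge0 => k _; apply: sumr_ge0 => l _; rewrite sqr_ge0.
rewrite (bigD1 i) //= (bigD1 j) //= -addrA lerDl.
apply: addr_ge0; apply: sumr_ge0 => k _; last apply: sumr_ge0 => l _; rewrite ?sqr_ge0 //.
Qed.

Lemma enorm_triw (a b : 'rV[R]_d) :
  enorm (a + b) <= d%:R * enorm a + d%:R * enorm b.
Proof.
apply: (le_trans (sqrt_sum_le _ _ _)).
apply: (@le_trans _ _ (\sum_(i < d) (`|a 0 i| + `|b 0 i|))).
  by apply: ler_sum => i _; rewrite mxE ler_normD.
rewrite big_split /=.
have E : forall c : 'rV[R]_d, \sum_(i < d) `|c 0 i| <= d%:R * enorm c.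
  move=> c; apply: (@le_trans _ _ (\sum_(i < d) enorm c)).
    by apply: ler_sum => i _; apply: coord_le_enorm.
  by rewrite sumr_const card_ord mulr_natl.
by apply: lerD; apply: E.
Qed.

Lemma frob_triw (a b : 'M[R]_d) :
  frob (a + b) <= (d * d)%:R * frob a + (d * d)%:R * frob b.
Proof.
have S : forall c : 'M[R]_d, frob c <= \sum_(i < d) \sum_(j < d) `|c i j|.
  move=> c; rewrite /frob.
  apply: (@le_trans _ _ (Num.sqrt (\sum_(i < d) (\sum_(j < d) `|c i j|) ^+ 2))).
    rewrite ler_sqrt; last by apply: sumr_ge0 => i _; rewrite sqr_ge0.
    apply: ler_sum => i _.
    apply: le_trans (@sum_sq_le _ (index_enum 'I_d) (fun j => c i j)) _.
    by rewrite le_eqVlt; apply/orP; left; apply/eqP; congr (_ ^+ 2); apply: eq_bigr => j _; rewrite normr_id.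
  apply: (le_trans (sqrt_sum_le _ _ _)).
  by apply: ler_sum => i _; rewrite ger0_norm //; apply: sumr_ge0 => j _.
apply: (le_trans (S _)).
apply: (@le_trans _ _ (\sum_(i < d) \sum_(j < d) (`|a i j| + `|b i j|))).
  by apply: ler_sum => i _; apply: ler_sum => j _; rewrite mxE ler_normD.
have E : forall c : 'M[R]_d, \sum_(i < d) \sum_(j < d) `|c i j| <= (d * d)%:R * frob c.
  move=> c; apply: (@le_trans _ _ (\sum_(i < d) \sum_(j < d) frob c)).
    by apply: ler_sum => i _; apply: ler_sum => j _; apply: coord_le_frob.
  rewrite sumr_const card_ord sumr_const card_ord.
  by rewrite -mulrnA mulr_natl.
under eq_bigr => i _ do rewrite big_split.
by rewrite big_split /=; apply: lerD; apply: E.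
Qed.

Lemma enormZ (s : R) (v : 'rV[R]_d) : enorm (s *: v) = `|s| * enorm v.
Proof.
rewrite /enorm (eq_bigr (fun i => s ^+ 2 * v 0 i ^+ 2)); last first.
  by move=> i _; rewrite mxE exprMn.
by rewrite -mulr_sumr sqrtrM ?sqr_ge0 // sqrtr_sqr.
Qed.

Lemma enormN (v : 'rV[R]_d) : enorm (- v) = enorm v.
Proof. by rewrite -scaleN1r enormZ normrN normr1 mul1r. Qed.

Lemma enorm0 : enorm (0 : 'rV[R]_d) = 0.
Proof.
rewrite /enorm big1 ?sqrtr0 // => i _; by rewrite mxE expr0n.
Qed.

Lemma dist_le (Th : set 'rV[R]_d) x y : Th y -> dist_set x Th <= enorm (x - y).
Proof.
move=> Thy; rewrite /dist_set.
apply: ge_inf; last by exists y.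
by exists 0 => _ [z _ <-]; apply: enorm_ge0.
Qed.


Lemma curve_length_seg (a w : 'rV[R]_d) :
  (curve_length (fun t : R => (a + t *: w)%R) <= (enorm w)%:E)%E.
Proof.
apply: ge_ereal_sup => l [n [t [t0 tn tmono ->]]]; rewrite lee_fin.
rewrite (eq_bigr (fun k : 'I_n => (t k.+1 - t k) * enorm w)); last first.
  move=> k _; rewrite opprD addrACA subrr add0r -scalerBl enormZ ger0_norm //.
  by rewrite subr_ge0; apply: tmono.
rewrite -mulr_suml -(big_mkord xpredT (fun k => t k.+1 - t k)) telescope_sumr //.
by rewrite tn t0 subr0 mul1r.
Qed.

Lemma seg_cont (a w : 'rV[R]_d) : continuous (fun t : R => a + t *: w).
Proof.
move=> t.
apply: (@cvgD R 'rV[R]_d).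
  exact: cvg_cst.
apply: (@cvgZ R 'rV[R]_d); [exact: cvg_id | exact: cvg_cst].
Qed.

Lemma step_lemma (k : nat) (u : R) : 0 <= u <= k.+1%:R ->
  exists j, (j <= k)%N /\ `|u - j%:R| <= 1.
Proof.
elim: k u => [|k IH] u /andP[u0 u1].
  by exists 0%N; split => //; rewrite subr0 ger0_norm.
have [uk|uk] := leP u k.+1%:R.
  have [j [jk hj]] := IH u (introT andP (conj u0 uk)).
  by exists j; split => //; apply: leqW.
exists k.+1; split => //.
rewrite ger0_norm; last by rewrite subr_ge0 ltW.
by move: u1; rewrite -[k.+2]addn1 natrD; lra.
Qed.


Lemma mu_far (Th : set 'rV[R]_d) (mu : 'rV[R]_d -> 'rV[R]_d) eps M1 Lm y0 :
  0 < eps -> Th y0 -> (forall x, tube Th eps x -> enorm (mu x) <= M1) ->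
  (forall x y, (~` Th) x -> (~` Th) y ->
    ((enorm (mu x - mu y))%:E <= Lm%:E * intrinsic_dist (~` Th) x y)%E) ->
  0 < Lm ->
  forall x, ~ tube Th eps x ->
  enorm (mu x) <= d%:R * M1 + d%:R * (Lm * enorm (y0 - x)).
Proof.
move=> eps0 Thy0 HM1 HL Lm0 x farx.
set v := y0 - x; set D := enorm v.
pose p := fun s : R => x + s *: v.
have D0 : 0 <= D by apply: enorm_ge0.
have pdiff : forall s t, p s - p t = (s - t) *: v.
  by move=> s t; rewrite /p opprD addrACA subrr add0r -scalerBl.
pose N := (Num.Def.archi_bound (D / eps)).+1.
have N0 : 0 < N%:R :> R by rewrite ltr0n.
have DN : D / N%:R < eps.
  have h := archi_boundP (divr_ge0 D0 (ltW eps0)).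
  have h2 : D / eps < N%:R.
    apply: (lt_le_trans h); rewrite ler_nat /N; exact: leqnSn.
  rewrite ltr_pdivrMr // mulrC -ltr_pdivrMr //.
pose P := fun k : nat => (k <= N)%N && (dist_set (p (k%:R / N%:R)) Th < eps).
have exP : exists k, P k.
  exists N; rewrite /P leqnn /= divff ?gt_eqF // /p scale1r /v addrC subrK.
  apply: (le_lt_trans (@dist_le Th y0 y0 Thy0)); rewrite subrr enorm0 //.
case: (ex_minnP exP) => k /andP[kN dk] kmin.
have Hfar : forall j, (j < k)%N -> eps <= dist_set (p (j%:R / N%:R)) Th.
  move=> j jk; rewrite leNgt; apply/negP => h.
  have : (k <= j)%N by apply: kmin; rewrite /P h andbT (leq_trans (ltnW jk) kN).
  by rewrite leqNgt jk.
have k0 : (0 < k)%N.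
  rewrite lt0n; apply/negP => /eqP k0; move: dk; rewrite k0 mul0r /p scale0r addr0.
  by move=> h; apply: farx.
have Hnot : forall s, 0 <= s <= k%:R / N%:R -> ~ Th (p s).
  move=> s /andP[s0 sk] Ths.
  have u01 : 0 <= s * N%:R <= k.-1.+1%:R.
    apply/andP; split; first by apply: mulr_ge0 => //; apply: ltW.
    by rewrite prednK // -ler_pdivlMr.
  have [j [jk hj]] := @step_lemma _ _ u01.
  have jk' : (j < k)%N by rewrite -(prednK k0) ltnS.
  have := Hfar j jk'.
  have := @dist_le Th (p (j%:R / N%:R)) _ Ths.
  rewrite pdiff enormZ.
  have : `|j%:R / N%:R - s| <= 1 / N%:R.
    have e : j%:R / N%:R - s = (j%:R - s * N%:R) / N%:R.
      by rewrite mulrBl mulfK ?gt_eqF.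
    rewrite e normrM normfV (ger0_norm (ltW N0)) distrC ler_pM2r ?invr_gt0 //.
  move=> hs h1 h2.
  have : `|j%:R / N%:R - s| * D <= D / N%:R.
    by apply: le_trans (ler_wpM2r D0 hs) _; rewrite mul1r mulrC.
  rewrite -/D in h1 => h3; lra.
have kN1 : (0 <= k%:R / N%:R :> R) && (k%:R / N%:R <= 1 :> R).
  apply/andP; split; first by apply: divr_ge0; rewrite ?ler0n ?ltW.
  by rewrite ler_pdivrMr // mul1r ler_nat.
set z := p (k%:R / N%:R).
have zTh : ~ Th z.
  by apply: Hnot; case/andP: kN1 => -> _; rewrite lexx.
have xTh : ~ Th x.
  move=> Thx; apply: farx; rewrite /tube /=.
  by apply: le_lt_trans (@dist_le Th x x Thx) _; rewrite subrr enorm0.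
have gz : z - x = (k%:R / N%:R) *: v by rewrite /z /p addrAC subrr add0r.
have hid : (intrinsic_dist (~` Th) x z <= (enorm (z - x))%:E)%E.
  apply: le_trans (curve_length_seg x (z - x)).
  apply: ereal_inf_lbound; exists (fun t : R => (x + t *: (z - x))%R) => //.
  split.
  - exact: continuous_subspaceT (seg_cont _ _).
  - move=> t; rewrite in_itv /= => /andP[t0 t1]; rewrite gz scalerA.
    case/andP: kN1 => k1 k2.
    apply: Hnot; apply/andP; split; first exact: mulr_ge0.
    exact: (ler_piMl k1 t1).
  - by rewrite scale0r addr0.
  - by rewrite scale1r addrC subrK.
have hL := HL x z xTh zTh.
have hd : enorm (mu x - mu z) <= Lm * D.
  rewrite -lee_fin; apply: (le_trans hL).
  apply: (le_trans (lee_wpmul2l _ hid)); first by rewrite lee_fin ltW.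
  rewrite -EFinM lee_fin; apply: ler_wpM2l; first exact: ltW.
  rewrite gz enormZ ger0_norm; last by case/andP: kN1.
  by case/andP: kN1 => _ k2; exact: ler_piMl D0 k2.
have hz : enorm (mu z) <= M1 by apply: HM1.
have -> : mu x = mu z + (mu x - mu z) by rewrite addrC subrK.
apply: (le_trans (enorm_triw _ _)).
by apply: lerD; apply: ler_wpM2l => //; rewrite ler0n.
Qed.

End Helpers.

Arguments enorm_ge0 {R d}. Arguments frob_ge0 {R d}. Arguments enorm_triw {R d}.
Arguments frob_triw {R d}. Arguments enormN {R d}. Arguments enormZ {R d}.

Theorem lemma1 (R : realType) (d : nat) (hd : (0 < d)%N)
  (Th : set 'rV[R]_d)
  (mu : 'rV[R]_d -> 'rV[R]_d) (sigma : 'rV[R]_d -> 'M[R]_d) :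
  Th !=set0 ->
  C1_hypersurface Th ->
  (0 < reach Th)%E ->
  (exists eps : R, [/\ 0 < eps, (eps%:E < reach Th)%E,
     (exists M : R, forall x, tube Th eps x -> enorm (mu x) <= M) &
     (exists M : R, forall x, tube Th eps x -> frob (sigma x) <= M)]) ->
  intrinsic_lipschitz (~` Th) mu ->
  (exists L : R, forall x y, frob (sigma x - sigma y) <= L * enorm (x - y)) ->
  exists c : R, 0 < c /\
    forall x, enorm (mu x) + frob (sigma x) <= c * (1 + enorm x).
Proof.
move=> [y0 Thy0] _ _ [eps [eps0 _ [M1 HM1] _]] [Lm [Lm0 HLm]] [Ls HLs].
have dd0 : 0 <= d%:R :> R by rewrite ler0n.
have DD0 : 0 <= (d * d)%:R :> R by rewrite ler0n.
have E00 := enorm_ge0 y0.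
have [A1 [B1 [A10 [B10 H1]]]] : exists A B : R, 0 <= A /\ 0 <= B /\
    forall x, enorm (mu x) <= A + B * enorm x.
  exists (`|M1| + d%:R * `|M1| + d%:R * (Lm * (d%:R * enorm y0))),
    (d%:R * (Lm * d%:R)).
  have n0 := normr_ge0 M1.
  have p1 : 0 <= d%:R * `|M1| by apply: mulr_ge0.
  have p2 : 0 <= d%:R * (Lm * (d%:R * enorm y0)).
    by apply: mulr_ge0 => //; apply: mulr_ge0; [exact: ltW | exact: mulr_ge0].
  have p3 : 0 <= d%:R * (Lm * d%:R).
    by apply: mulr_ge0 => //; apply: mulr_ge0; [exact: ltW | done].
  split; first lra.
  split; first done.
  move=> x; have e0 := enorm_ge0 x.
  have p4 := mulr_ge0 p3 e0.
  case: (pselect (tube Th eps x)) => tx.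
    have := HM1 x tx; have := ler_norm M1; lra.
  have h := @mu_far R d Th mu eps M1 Lm y0 eps0 Thy0 HM1 HLm Lm0 x tx.
  have hD : enorm (y0 - x) <= d%:R * enorm y0 + d%:R * enorm x.
    by have := enorm_triw y0 (- x); rewrite enormN.
  have h1 := ler_wpM2l dd0 (ler_wpM2l (ltW Lm0) hD).
  have h2 := ler_wpM2l dd0 (ler_norm M1).
  have eq : d%:R * (Lm * (d%:R * enorm y0 + d%:R * enorm x)) =
    d%:R * (Lm * (d%:R * enorm y0)) + d%:R * (Lm * d%:R) * enorm x by ring.
  rewrite eq in h1; lra.
have [A2 [B2 [A20 [B20 H2]]]] : exists A B : R, 0 <= A /\ 0 <= B /\
    forall x, frob (sigma x) <= A + B * enorm x.
  exists ((d * d)%:R * frob (sigma y0) + (d * d)%:R * (`|Ls| * (d%:R * enorm y0))),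
    ((d * d)%:R * (`|Ls| * d%:R)).
  have n0 := normr_ge0 Ls.
  have p1 : 0 <= (d * d)%:R * frob (sigma y0) by apply: mulr_ge0 => //; exact: frob_ge0.
  have p2 : 0 <= (d * d)%:R * (`|Ls| * (d%:R * enorm y0)).
    by apply: mulr_ge0 => //; apply: mulr_ge0 => //; exact: mulr_ge0.
  have p3 : 0 <= (d * d)%:R * (`|Ls| * d%:R).
    by apply: mulr_ge0 => //; apply: mulr_ge0.
  split; first lra.
  split; first done.
  move=> x; have e0 := enorm_ge0 x.
  have -> : sigma x = sigma y0 + (sigma x - sigma y0) by rewrite addrC subrK.
  apply: (le_trans (frob_triw _ _)).
  have hD : enorm (x - y0) <= d%:R * enorm x + d%:R * enorm y0.
    by have := enorm_triw x (- y0); rewrite enormN.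
  have h0 : frob (sigma x - sigma y0) <= `|Ls| * enorm (x - y0).
    apply: (le_trans (HLs x y0)); apply: ler_wpM2r; [exact: enorm_ge0 | exact: ler_norm].
  have h1 := ler_wpM2l DD0 (le_trans h0 (ler_wpM2l n0 hD)).
  have eq : (d * d)%:R * (`|Ls| * (d%:R * enorm x + d%:R * enorm y0)) =
    (d * d)%:R * (`|Ls| * (d%:R * enorm y0)) + (d * d)%:R * (`|Ls| * d%:R) * enorm x
    by ring.
  rewrite eq in h1; lra.
exists (A1 + A2 + B1 + B2 + 1); split; first lra.
move=> x; have e0 := enorm_ge0 x.
have := H1 x; have := H2 x.
have := mulr_ge0 A10 e0; have := mulr_ge0 A20 e0.
move=> a b c e.
have -> : (A1 + A2 + B1 + B2 + 1) * (1 + enorm x) =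
  (A1 + B1 * enorm x) + (A2 + B2 * enorm x) + (A1 * enorm x + A2 * enorm x + B1 + B2 + 1 + enorm x) by ring.
apply: (@le_trans _ _ ((A1 + B1 * enorm x) + (A2 + B2 * enorm x))).
  exact: lerD.
rewrite lerDl; lra.
Qed.
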